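(* Assume Second-order Absolute Morley. Then for every lightface projective set $A\subseteq 2^\omega$, either $|A|\leq\aleph_1$ or $A$ contains a perfect set.
   Context: Second-order Absolute Morley is the statement: for every second-order theory $T$ in a countable signature, either $T$ has at most $\aleph_1$ isomorphism classes of countable models, or there is a perfect set of pairwise non-isomorphic countable models of $T$. Here countable models with universe $\omega$ are identified with points of a Cantor space via the values of their relations (product topology), so ''perfect set of models'' means a nonempty closed set without isolated points in this space of codes; equivalently a continuous injection of $2^\omega$ into the space of models of $T$ whose images are pairwise non-isomorphic. A set $A\subseteq 2^\omega$ is lightface projective if it is definable over second-order arithmetic by a projective formula without real parameters. A perfect set is a nonempty closed subset of $2^\omega$ without isolated points. *)

(* Defs.v *)
From Stdlib Require Import Arith List.
From Stdlib Require Vector.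

Set Implicit Arguments.

Definition countable (X : Type) : Prop :=
  exists f : X -> nat, forall a b, f a = f b -> a = b.

Definition strict_well_order {W : Type} (lt : W -> W -> Prop) : Prop :=
  well_founded lt /\
  (forall a b c, lt a b -> lt b c -> lt a c) /\
  (forall a b, lt a b \/ a = b \/ lt b a).

(* A well-order all of whose proper initial segments are countable,
   i.e. a well-order of order type <= omega_1. *)
Definition omega1_like {W : Type} (lt : W -> W -> Prop) : Prop :=
  strict_well_order lt /\ forall w, countable {u : W | lt u w}.

Definition card_le_aleph1 {X : Type} (P : X -> Prop) : Prop :=
  exists (W : Type) (lt : W -> W -> Prop), omega1_like lt /\
    exists f : X -> W, forall a b, P a -> P b -> f a = f b -> a = b.

Definition classes_le_aleph1 {X : Type} (P : X -> Prop) (E : X -> X -> Prop) : Prop :=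
  exists (W : Type) (lt : W -> W -> Prop), omega1_like lt /\
    exists f : X -> W, forall a b, P a -> P b -> f a = f b -> E a b.

Definition cantor := nat -> bool.

Definition agree_upto (n : nat) (x y : cantor) : Prop :=
  forall i, i < n -> x i = y i.

Definition closed_cantor (P : cantor -> Prop) : Prop :=
  forall x, (forall n, exists y, P y /\ agree_upto n x y) -> P x.

Definition no_isolated_cantor (P : cantor -> Prop) : Prop :=
  forall x, P x -> forall n, exists y, P y /\ y <> x /\ agree_upto n x y.

Definition perfect_cantor (P : cantor -> Prop) : Prop :=
  (exists x, P x) /\ closed_cantor P /\ no_isolated_cantor P.

Record signature : Type := {
  sym : Type;
  arity : sym -> nat;
  sym_countable : countable sym
}.

Definition structure (S : signature) : Type :=
  forall s : sym S, Vector.t nat (arity S s) -> bool.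

(* atomic facts R(a_1..a_k); the space of structures carries the product
   topology on 2^{atoms}, which is the Cantor-space topology on codes *)
Definition atom (S : signature) : Type :=
  {s : sym S & Vector.t nat (arity S s)}.

Definition agree_on (S : signature) (L : list (atom S)) (M N : structure S) : Prop :=
  forall a, List.In a L -> M (projT1 a) (projT2 a) = N (projT1 a) (projT2 a).

Definition closed_struct (S : signature) (P : structure S -> Prop) : Prop :=
  forall M, (forall L, exists N, P N /\ agree_on L M N) -> P M.

Definition no_isolated_struct (S : signature) (P : structure S -> Prop) : Prop :=
  forall M, P M -> forall L, exists N, P N /\ N <> M /\ agree_on L M N.

Definition perfect_struct (S : signature) (P : structure S -> Prop) : Prop :=
  (exists M, P M) /\ closed_struct P /\ no_isolated_struct P.

Definition bijective_nat (h : nat -> nat) : Prop :=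
  (forall a b, h a = h b -> a = b) /\ (forall b, exists a, h a = b).

Definition iso (S : signature) (M N : structure S) : Prop :=
  exists h : nat -> nat, bijective_nat h /\
    forall s v, M s v = N s (Vector.map h v).

(* First-order variables are numbered; second-order relation variables of
   arity k are numbered separately for each k. *)

Inductive so_formula (S : signature) : Type :=
| SRel (s : sym S) (xs : Vector.t nat (arity S s))
| SVar (k : nat) (X : nat) (xs : Vector.t nat k)
| SEq (x y : nat)
| SNot (phi : so_formula S)
| SAnd (phi psi : so_formula S)
| SAll1 (x : nat) (phi : so_formula S)
| SAll2 (k : nat) (X : nat) (phi : so_formula S).

Arguments SRel {S}.
Arguments SVar {S}.
Arguments SEq {S}.
Arguments SNot {S}.
Arguments SAnd {S}.
Arguments SAll1 {S}.
Arguments SAll2 {S}.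

Definition env1 := nat -> nat.
Definition env2 := forall k : nat, nat -> Vector.t nat k -> Prop.

Definition upd1 (e : env1) (x a : nat) : env1 :=
  fun y => if Nat.eqb y x then a else e y.

Definition upd2 (e : env2) (k X : nat) (R : Vector.t nat k -> Prop) : env2 :=
  fun j => match Nat.eq_dec k j with
           | left H => eq_rect k (fun j => nat -> Vector.t nat j -> Prop)
                         (fun Y => if Nat.eqb Y X then R else e k Y) j H
           | right _ => e j
           end.

(* Full (standard) semantics: second-order quantifiers range over all relations *)
Fixpoint so_sat (S : signature) (M : structure S) (e1 : env1) (e2 : env2)
  (phi : so_formula S) : Prop :=
  match phi with
  | SRel s xs => M s (Vector.map e1 xs) = true
  | SVar k X xs => e2 k X (Vector.map e1 xs)
  | SEq x y => e1 x = e1 y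
  | SNot p => ~ so_sat M e1 e2 p
  | SAnd p q => so_sat M e1 e2 p /\ so_sat M e1 e2 q
  | SAll1 x p => forall a : nat, so_sat M (upd1 e1 x a) e2 p
  | SAll2 k X p => forall R : Vector.t nat k -> Prop, so_sat M e1 (@upd2 e2 k X R) p
  end.

Definition so_model (S : signature) (T : so_formula S -> Prop) (M : structure S) : Prop :=
  forall phi, T phi -> forall e1 e2, so_sat M e1 e2 phi.

Definition SecondOrderAbsoluteMorley : Prop :=
  forall (S : signature) (T : so_formula S -> Prop),
    classes_le_aleph1 (so_model T) (@iso S) \/
    exists P : structure S -> Prop,
      perfect_struct P /\
      (forall M, P M -> so_model T M) /\
      (forall M N, P M -> P N -> M <> N -> ~ iso M N).

Inductive aterm : Type :=
| AVar (n : nat)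
| AZero
| ASucc (t : aterm)
| APlus (t u : aterm)
| AMult (t u : aterm).

Inductive aform : Type :=
| AEq (t u : aterm)
| ALt (t u : aterm)
| AMem (t : aterm) (X : nat)
| ANot (phi : aform)
| AAnd (phi psi : aform)
| AAllN (n : nat) (phi : aform)
| AAllS (X : nat) (phi : aform).

Fixpoint aeval (e : nat -> nat) (t : aterm) : nat :=
  match t with
  | AVar n => e n
  | AZero => 0
  | ASucc t => S (aeval e t)
  | APlus t u => aeval e t + aeval e u
  | AMult t u => aeval e t * aeval e u
  end.

Fixpoint asat (e1 : nat -> nat) (e2 : nat -> nat -> Prop) (phi : aform) : Prop :=
  match phi with
  | AEq t u => aeval e1 t = aeval e1 u
  | ALt t u => aeval e1 t < aeval e1 u
  | AMem t X => e2 X (aeval e1 t)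
  | ANot p => ~ asat e1 e2 p
  | AAnd p q => asat e1 e2 p /\ asat e1 e2 q
  | AAllN n p => forall a : nat, asat (fun m => if Nat.eqb m n then a else e1 m) e2 p
  | AAllS X p => forall Y : nat -> Prop,
      asat e1 (fun Z => if Nat.eqb Z X then Y else e2 Z) p
  end.

(* A is lightface projective: defined in second-order arithmetic by a formula
   with no real parameters; the real x is assigned to set variable 0
   (other free variables get the definable defaults 0 and the empty set). *)
Definition lightface_projective (A : cantor -> Prop) : Prop :=
  exists phi : aform, forall x : cantor,
    A x <-> asat (fun _ => 0) (fun X n => if Nat.eqb X 0 then x n = true else False) phi.

(* Main.v *)
Require Import Defs.
From Stdlib Require Import Arith List Lia Classical ClassicalEpsilon FunctionalExtensionality Eqdep_dec Cantor.
From Stdlib Require Vector VectorSpec.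

Section Compact.
Variable X : Type.
Variable code : X -> nat.
Hypothesis code_inj : forall a b, code a = code b -> a = b.
Variable P : (X -> bool) -> Prop.
Hypothesis Pclosed : forall g, (forall L : list X, exists h, P h /\ forall a, In a L -> h a = g a) -> P g.
Variable R : nat -> (X -> bool) -> Prop.
Hypothesis Rmono : forall n m g, n <= m -> R m g -> R n g.
Variable D : nat -> list X.
Hypothesis Rloc : forall n g g', (forall a, In a (D n) -> g a = g' a) -> R n g -> R n g'.
Hypothesis Rne : forall n, exists h, P h /\ R n h.

Definition good k (c : nat -> bool) := forall m, exists h, P h /\ R m h /\ forall a, code a < k -> h a = c (code a).
Definition updb (c : nat -> bool) k (b : bool) := fun j => if Nat.eqb j k then b else c j.

Lemma good_step k c : good k c -> good (S k) (updb c k true) \/ good (S k) (updb c k false).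
Proof.
  intro G. apply NNPP; intro H. apply not_or_and in H. destruct H as [H1 H2].
  apply not_all_ex_not in H1. apply not_all_ex_not in H2.
  destruct H1 as [m1 H1]. destruct H2 as [m2 H2].
  destruct (G (max m1 m2)) as [h [Ph [Rh Eh]]].
  assert (K : forall b, (forall a, code a = k -> h a = b) ->
      forall a, code a < S k -> h a = updb c k b (code a)).
  { intros b Hb a Ha. unfold updb. destruct (Nat.eqb_spec (code a) k).
    - auto.
    - apply Eh. lia. }
  destruct (classic (exists a0, code a0 = k)) as [[a0 Ha0]|Hn].
  - assert (Hb : forall a, code a = k -> h a = h a0).
    { intros a Ha. rewrite (code_inj a a0) by congruence. reflexivity. }
    destruct (h a0) eqn:E.
    + apply H1. exists h. split; [auto|split].
      apply (Rmono m1 (max m1 m2)); auto; lia.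
      apply K; auto.
    + apply H2. exists h. split; [auto|split].
      apply (Rmono m2 (max m1 m2)); auto; lia.
      apply K; auto.
  - apply H1. exists h. split; [auto|split].
    apply (Rmono m1 (max m1 m2)); auto; lia.
    apply K. intros a Ha. exfalso; eauto.
Qed.

Fixpoint F (k : nat) : nat -> bool :=
  match k with
  | 0 => fun _ => false
  | S k => if excluded_middle_informative (good (S k) (updb (F k) k true))
           then updb (F k) k true else updb (F k) k false
  end.

Lemma F_good k : good k (F k).
Proof.
  induction k.
  - intro m. destruct (Rne m) as [h [Ph Rh]]. exists h. repeat split; auto. intros; lia.
  - simpl. destruct (excluded_middle_informative _); auto.
    destruct (good_step _ _ IHk); tauto.
Qed.

Lemma F_stab k j : j < k -> F k j = F (S j) j.
Proof.
  induction k; intros Hj. lia.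
  destruct (Nat.eq_dec j k). subst; auto.
  rewrite <- IHk by lia. simpl. destruct (excluded_middle_informative _); unfold updb;
  destruct (Nat.eqb_spec j k); try lia; auto.
Qed.

Definition glim (a : X) := F (S (code a)) (code a).

Lemma bound_list (L : list X) : exists k, forall a, In a L -> code a < k.
Proof.
  induction L as [|x L [k Hk]]. exists 0; simpl; tauto.
  exists (S (max k (code x))). intros a [<-|Ha]. lia. specialize (Hk a Ha). lia.
Qed.

Lemma compact : exists g, P g /\ forall n, R n g.
Proof.
  exists glim. split.
  - apply Pclosed. intro L. destruct (bound_list L) as [k Hk].
    destruct (F_good k 0) as [h [Ph [_ Eh]]]. exists h. split; auto.
    intros a Ha. rewrite Eh by auto. unfold glim. apply F_stab. auto.
  - intro n. destruct (bound_list (D n)) as [k Hk].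
    destruct (F_good k n) as [h [Ph [Rh Eh]]]. apply (Rloc n h); auto.
    intros a Ha. rewrite Eh by auto. unfold glim. apply F_stab. auto.
Qed.
End Compact.

Notation vn := (Vector.nil nat).
Notation vc a v := (Vector.cons nat a _ v).

Lemma vec0 (v : Vector.t nat 0) : v = vn.
Proof. apply (Vector.case0 (fun v => v = vn)). reflexivity. Qed.
Lemma vecS n (v : Vector.t nat (S n)) : exists a w, v = vc a w.
Proof. apply (Vector.caseS' v). eauto. Qed.

Inductive sy := SBit (n : nat) | SZ | SS | SP | SM | SU.
Definition ar (s : sy) : nat :=
  match s with SBit _ => 0 | SZ => 1 | SS => 2 | SP => 3 | SM => 3 | SU => 1 end.
Definition sycode (s : sy) : nat :=
  match s with SBit n => 5 + n | SZ => 0 | SS => 1 | SP => 2 | SM => 3 | SU => 4 end.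
Lemma sycode_inj : forall a b, sycode a = sycode b -> a = b.
Proof. intros [] []; simpl; intros H; try reflexivity; try lia; f_equal; lia. Qed.

Definition sg : signature := {| sym := sy; arity := ar; sym_countable := ex_intro _ sycode sycode_inj |}.

Definition get (i : nat) {k} (v : Vector.t nat k) : nat := nth i (Vector.to_list v) 0.

Definition Mx (x : cantor) : structure sg :=
  fun s => match s return Vector.t nat (ar s) -> bool with
  | SBit n => fun _ => x n
  | SZ => fun v => Nat.eqb (get 0 v) 0
  | SS => fun v => Nat.eqb (get 1 v) (S (get 0 v))
  | SP => fun v => Nat.eqb (get 2 v) (get 0 v + get 1 v)
  | SM => fun v => Nat.eqb (get 2 v) (get 0 v * get 1 v)
  | SU => fun v => x (get 0 v)
  end.

Definition bits (M : structure sg) : cantor := fun n => M (SBit n) vn.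

Definition FEx (x : nat) (p : so_formula sg) := SNot (SAll1 x (SNot p)).
Definition FImp (p q : so_formula sg) := SNot (SAnd p (SNot q)).
Definition FIff (p q : so_formula sg) := SAnd (FImp p q) (FImp q p).
Definition FFalse : so_formula sg := SNot (SEq 0 0).

Lemma sat_Ex M e1 e2 x p : so_sat M e1 e2 (FEx x p) <-> exists a, so_sat M (upd1 e1 x a) e2 p.
Proof. simpl. split. intro H. apply NNPP. intro H'. apply H. intros a Ha. apply H'. eauto.
  intros [a Ha] H. exact (H a Ha). Qed.
Lemma sat_Imp M e1 e2 p q : so_sat M e1 e2 (FImp p q) <-> (so_sat M e1 e2 p -> so_sat M e1 e2 q).
Proof. simpl. split. intros H Hp. apply NNPP. intro. apply H; auto. intros H [Hp Hq]. auto. Qed.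
Lemma sat_Iff M e1 e2 p q : so_sat M e1 e2 (FIff p q) <-> (so_sat M e1 e2 p <-> so_sat M e1 e2 q).
Proof. unfold FIff. change (so_sat M e1 e2 (FImp p q) /\ so_sat M e1 e2 (FImp q p) <-> (so_sat M e1 e2 p <-> so_sat M e1 e2 q)). rewrite !sat_Imp. tauto. Qed.
Lemma sat_False M e1 e2 : ~ so_sat M e1 e2 FFalse.
Proof. simpl. auto. Qed.

Lemma upd1_eq e x a : upd1 e x a x = a.
Proof. unfold upd1. rewrite Nat.eqb_refl. auto. Qed.
Lemma upd1_neq e x a y : y <> x -> upd1 e x a y = e y.
Proof. unfold upd1. intros H. destruct (Nat.eqb_spec y x); congruence. Qed.

Lemma upd2_1 e2 X (R : Vector.t nat 1 -> Prop) Y : @upd2 e2 1 X R 1 Y = if Nat.eqb Y X then R else e2 1 Y.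
Proof. unfold upd2. destruct (Nat.eq_dec 1 1) as [H|H]; [|congruence].
  rewrite (UIP_refl_nat _ H). reflexivity. Qed.
Definition mem (n : nat) (l : list nat) : bool := existsb (Nat.eqb n) l.
Definition vm (bn : list nat) (n : nat) : nat := if mem n bn then 2 * n else 1.
Definition temp (j : nat) : nat := 2 * j + 3.

Fixpoint trt (bn : list nat) (t : aterm) (y k : nat) : so_formula sg :=
  match t with
  | AVar n => SEq y (vm bn n)
  | AZero => @SRel sg SZ (vc y vn)
  | ASucc t => FEx (temp k) (SAnd (trt bn t (temp k) (S k)) (@SRel sg SS (vc (temp k) (vc y vn))))
  | APlus t u => FEx (temp k) (FEx (temp (S k)) (SAnd (trt bn t (temp k) (S (S k)))
        (SAnd (trt bn u (temp (S k)) (S (S k))) (@SRel sg SP (vc (temp k) (vc (temp (S k)) (vc y vn)))))))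
  | AMult t u => FEx (temp k) (FEx (temp (S k)) (SAnd (trt bn t (temp k) (S (S k)))
        (SAnd (trt bn u (temp (S k)) (S (S k))) (@SRel sg SM (vc (temp k) (vc (temp (S k)) (vc y vn)))))))
  end.

Definition memf (bs : list nat) (X z : nat) : so_formula sg :=
  if mem X bs then SVar 1 X (vc z vn)
  else if Nat.eqb X 0 then @SRel sg SU (vc z vn) else FFalse.

Fixpoint tr (bn bs : list nat) (phi : aform) : so_formula sg :=
  match phi with
  | AEq t u => FEx (temp 0) (FEx (temp 1) (SAnd (trt bn t (temp 0) 2)
        (SAnd (trt bn u (temp 1) 2) (SEq (temp 0) (temp 1)))))
  | ALt t u => FEx (temp 0) (FEx (temp 1) (FEx (temp 2) (FEx (temp 3)
        (SAnd (trt bn t (temp 0) 4) (SAnd (trt bn u (temp 1) 4)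
          (SAnd (@SRel sg SS (vc (temp 2) (vc (temp 3) vn)))
                (@SRel sg SP (vc (temp 0) (vc (temp 3) (vc (temp 1) vn))))))))))
  | AMem t X => FEx (temp 0) (SAnd (trt bn t (temp 0) 1) (memf bs X (temp 0)))
  | ANot p => SNot (tr bn bs p)
  | AAnd p q => SAnd (tr bn bs p) (tr bn bs q)
  | AAllN n p => SAll1 (2 * n) (tr (n :: bn) bs p)
  | AAllS X p => SAll2 1 X (tr bn (X :: bs) p)
  end.

Definition theta (phi : aform) : so_formula sg :=
  SAll1 1 (FImp (@SRel sg SZ (vc 1 vn)) (tr nil nil phi)).

Section Transl.
Variable M : structure sg.
Variable x : cantor.
Variable h hinv : nat -> nat.
Hypothesis Hiso : forall s v, M s v = Mx x s (Vector.map h v).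
Hypothesis hK : forall n, h (hinv n) = n.
Hypothesis hinj : forall a b, h a = h b -> a = b.

Definition RelN bn (e1 : env1) (ae1 : nat -> nat) :=
  h (e1 1) = 0 /\ forall n, if mem n bn then h (e1 (2 * n)) = ae1 n else ae1 n = 0.
Definition RelS bs (e2 : env2) (ae2 : nat -> nat -> Prop) :=
  forall X, if mem X bs then (forall b, e2 1 X (vc b vn) <-> ae2 X (h b))
            else (forall m, ae2 X m <-> (X = 0 /\ x m = true)).

Lemma temp_ne1 j : temp j <> 1. Proof. unfold temp; lia. Qed.
Lemma temp_ne2 j n : temp j <> 2 * n. Proof. unfold temp; lia. Qed.
Lemma temp_inj i j : temp i = temp j -> i = j. Proof. unfold temp; lia. Qed.

Lemma RelN_temp bn e1 ae1 j a : RelN bn e1 ae1 -> RelN bn (upd1 e1 (temp j) a) ae1.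
Proof.
  intros [H1 H2]. split.
  - rewrite upd1_neq; auto. intro E; symmetry in E; apply (temp_ne1 j); auto.
  - intro n. specialize (H2 n). destruct (mem n bn); auto.
    rewrite upd1_neq; auto. intro E; symmetry in E. apply (temp_ne2 j n); auto.
Qed.

Lemma sat_SZ e1 e2 y : so_sat M e1 e2 (@SRel sg SZ (vc y vn)) <-> h (e1 y) = 0.
Proof. simpl. rewrite Hiso. simpl. unfold get; simpl. apply Nat.eqb_eq. Qed.
Lemma sat_SS e1 e2 y z : so_sat M e1 e2 (@SRel sg SS (vc y (vc z vn))) <-> h (e1 z) = S (h (e1 y)).
Proof. simpl. rewrite Hiso. simpl. unfold get; simpl. apply Nat.eqb_eq. Qed.
Lemma sat_SP e1 e2 a b c : so_sat M e1 e2 (@SRel sg SP (vc a (vc b (vc c vn)))) <-> h (e1 c) = h (e1 a) + h (e1 b).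
Proof. simpl. rewrite Hiso. simpl. unfold get; simpl. apply Nat.eqb_eq. Qed.
Lemma sat_SM e1 e2 a b c : so_sat M e1 e2 (@SRel sg SM (vc a (vc b (vc c vn)))) <-> h (e1 c) = h (e1 a) * h (e1 b).
Proof. simpl. rewrite Hiso. simpl. unfold get; simpl. apply Nat.eqb_eq. Qed.
Lemma sat_SU e1 e2 a : so_sat M e1 e2 (@SRel sg SU (vc a vn)) <-> x (h (e1 a)) = true.
Proof. simpl. rewrite Hiso. simpl. unfold get; simpl. tauto. Qed.
Lemma sat_Eq e1 e2 a b : so_sat M e1 e2 (SEq a b) <-> h (e1 a) = h (e1 b).
Proof. simpl. split; intro H. rewrite H; auto. apply hinj; auto. Qed.

Ltac solve_ne Hy := let E := fresh in intro E;
  first [ apply temp_inj in E; lia | eapply Hy; [|exact E]; lia | eapply Hy; [|symmetry; exact E]; lia ].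
Ltac updsimp Hy := repeat match goal with
  | H : context [upd1 ?e ?z ?a ?w] |- _ =>
      first [ constr_eq z w; rewrite (upd1_eq e z a) in H
            | rewrite (upd1_neq e z a w) in H by (solve_ne Hy) ]
  | |- context [upd1 ?e ?z ?a ?w] =>
      first [ constr_eq z w; rewrite (upd1_eq e z a)
            | rewrite (upd1_neq e z a w) by (solve_ne Hy) ]
  end.

Lemma trt_ok t : forall bn k y e1 e2 ae1, RelN bn e1 ae1 -> (forall j, k <= j -> y <> temp j) ->
  (so_sat M e1 e2 (trt bn t y k) <-> h (e1 y) = aeval ae1 t).
Proof.
  induction t; intros bn k y e1 e2 ae1 HR Hy; simpl trt; simpl aeval.
  - rewrite sat_Eq. destruct HR as [H1 H2]. specialize (H2 n). unfold vm.
    destruct (mem n bn); rewrite H2; try rewrite H1; try reflexivity.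
  - apply sat_SZ.
  - rewrite sat_Ex. split.
    + intros [a Ha]. change (so_sat M (upd1 e1 (temp k) a) e2 (trt bn t (temp k) (S k)) /\
         so_sat M (upd1 e1 (temp k) a) e2 (@SRel sg SS (vc (temp k) (vc y vn)))) in Ha.
      destruct Ha as [Ha1 Ha2]. rewrite sat_SS in Ha2.
      rewrite (IHt _ _ _ _ _ ae1) in Ha1; [|apply RelN_temp; auto| intros j Hj E; apply temp_inj in E; lia].
      updsimp Hy. lia.
    + intro E. exists (hinv (aeval ae1 t)). split.
      * rewrite (IHt _ _ _ _ _ ae1); [|apply RelN_temp; auto| intros j Hj E'; apply temp_inj in E'; lia].
        updsimp Hy. auto.
      * rewrite sat_SS. updsimp Hy. rewrite hK. auto.
  - rewrite sat_Ex. setoid_rewrite sat_Ex. split.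
    + intros [a [b Ha]].
      change (so_sat M (upd1 (upd1 e1 (temp k) a) (temp (S k)) b) e2 (trt bn t1 (temp k) (S (S k))) /\
         so_sat M (upd1 (upd1 e1 (temp k) a) (temp (S k)) b) e2 (trt bn t2 (temp (S k)) (S (S k))) /\
         so_sat M (upd1 (upd1 e1 (temp k) a) (temp (S k)) b) e2 (@SRel sg SP (vc (temp k) (vc (temp (S k)) (vc y vn))))) in Ha.
      destruct Ha as [Ha1 [Ha2 Ha3]]. rewrite sat_SP in Ha3.
      rewrite (IHt1 _ _ _ _ _ ae1) in Ha1; [|apply RelN_temp, RelN_temp; auto| intros j Hj E; apply temp_inj in E; lia].
      rewrite (IHt2 _ _ _ _ _ ae1) in Ha2; [|apply RelN_temp, RelN_temp; auto| intros j Hj E; apply temp_inj in E; lia].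
      updsimp Hy. lia.
    + intro E. exists (hinv (aeval ae1 t1)), (hinv (aeval ae1 t2)). split; [|split].
      * rewrite (IHt1 _ _ _ _ _ ae1); [|apply RelN_temp, RelN_temp; auto| intros j Hj E'; apply temp_inj in E'; lia].
        updsimp Hy. auto.
      * rewrite (IHt2 _ _ _ _ _ ae1); [|apply RelN_temp, RelN_temp; auto| intros j Hj E'; apply temp_inj in E'; lia].
        updsimp Hy. auto.
      * rewrite sat_SP. updsimp Hy. rewrite !hK. auto.
  - rewrite sat_Ex. setoid_rewrite sat_Ex. split.
    + intros [a [b Ha]].
      change (so_sat M (upd1 (upd1 e1 (temp k) a) (temp (S k)) b) e2 (trt bn t1 (temp k) (S (S k))) /\
         so_sat M (upd1 (upd1 e1 (temp k) a) (temp (S k)) b) e2 (trt bn t2 (temp (S k)) (S (S k))) /\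
         so_sat M (upd1 (upd1 e1 (temp k) a) (temp (S k)) b) e2 (@SRel sg SM (vc (temp k) (vc (temp (S k)) (vc y vn))))) in Ha.
      destruct Ha as [Ha1 [Ha2 Ha3]]. rewrite sat_SM in Ha3.
      rewrite (IHt1 _ _ _ _ _ ae1) in Ha1; [|apply RelN_temp, RelN_temp; auto| intros j Hj E; apply temp_inj in E; lia].
      rewrite (IHt2 _ _ _ _ _ ae1) in Ha2; [|apply RelN_temp, RelN_temp; auto| intros j Hj E; apply temp_inj in E; lia].
      updsimp Hy. rewrite Ha3, Ha1, Ha2. auto.
    + intro E. exists (hinv (aeval ae1 t1)), (hinv (aeval ae1 t2)). split; [|split].
      * rewrite (IHt1 _ _ _ _ _ ae1); [|apply RelN_temp, RelN_temp; auto| intros j Hj E'; apply temp_inj in E'; lia].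
        updsimp Hy. auto.
      * rewrite (IHt2 _ _ _ _ _ ae1); [|apply RelN_temp, RelN_temp; auto| intros j Hj E'; apply temp_inj in E'; lia].
        updsimp Hy. auto.
      * rewrite sat_SM. updsimp Hy. rewrite !hK. auto.
Qed.
End Transl.

Section Transl2.
Variable M : structure sg.
Variable x : cantor.
Variable h hinv : nat -> nat.
Hypothesis Hiso : forall s v, M s v = Mx x s (Vector.map h v).
Hypothesis hK : forall n, h (hinv n) = n.
Hypothesis hinj : forall a b, h a = h b -> a = b.

Ltac solve_ne0 := let E := fresh in intro E; apply temp_inj in E; lia.
Ltac updsimp0 := repeat match goal with
  | H : context [upd1 ?e ?z ?a ?w] |- _ =>
      first [ constr_eq z w; rewrite (upd1_eq e z a) in H
            | rewrite (upd1_neq e z a w) in H by solve_ne0 ]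
  | |- context [upd1 ?e ?z ?a ?w] =>
      first [ constr_eq z w; rewrite (upd1_eq e z a)
            | rewrite (upd1_neq e z a w) by solve_ne0 ]
  end.

Lemma memf_ok bs X z e1 e2 ae2 : RelS x h bs e2 ae2 ->
  (so_sat M e1 e2 (memf bs X z) <-> ae2 X (h (e1 z))).
Proof.
  intro HS. specialize (HS X). unfold memf. destruct (mem X bs).
  - simpl. rewrite HS. tauto.
  - rewrite HS. destruct (Nat.eqb_spec X 0).
    + rewrite (sat_SU M x h Hiso). tauto.
    + split. intro H; exfalso; exact (sat_False _ _ _ H). tauto.
Qed.

Ltac trtrw H t := match goal with HN : RelN _ _ _ ?a |- _ => rewrite (trt_ok M x h hinv Hiso hK hinj t _ _ _ _ _ a) in H end;
  [ | apply RelN_temp; repeat apply RelN_temp; auto | let E0 := fresh in intros ? ? E0; apply temp_inj in E0; lia ].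
Ltac trtrwg t := match goal with HN : RelN _ _ _ ?a |- _ => rewrite (trt_ok M x h hinv Hiso hK hinj t _ _ _ _ _ a) end;
  [ | apply RelN_temp; repeat apply RelN_temp; eauto | let E0 := fresh in intros ? ? E0; apply temp_inj in E0; lia ].

Lemma RelN_cons bn e1 ae1 n b : RelN h bn e1 ae1 ->
  RelN h (n :: bn) (upd1 e1 (2 * n) b) (fun m => if Nat.eqb m n then h b else ae1 m).
Proof.
  intros [H1 H2]. split.
  - rewrite upd1_neq by lia. auto.
  - intro m. unfold mem; simpl. fold (mem m bn). rewrite (Nat.eqb_sym m n).
    destruct (Nat.eqb_spec n m).
    + subst. simpl. rewrite ?Nat.eqb_refl. rewrite upd1_eq. auto.
    + simpl. specialize (H2 m). destruct (Nat.eqb_spec m n); [lia|].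
      destruct (mem m bn); simpl; auto. rewrite upd1_neq by lia. auto.
Qed.

Lemma RelS_cons bs e2 ae2 X (R : Vector.t nat 1 -> Prop) (Y : nat -> Prop) :
  RelS x h bs e2 ae2 -> (forall b, R (vc b vn) <-> Y (h b)) ->
  RelS x h (X :: bs) (@upd2 e2 1 X R) (fun Z => if Nat.eqb Z X then Y else ae2 Z).
Proof.
  intros HS HR Z. unfold mem; simpl. fold (mem Z bs). rewrite upd2_1.
  destruct (Nat.eqb_spec Z X).
  - simpl. auto.
  - simpl. specialize (HS Z). destruct (mem Z bs); auto.
Qed.

Lemma tr_ok phi : forall bn bs e1 e2 ae1 ae2, RelN h bn e1 ae1 -> RelS x h bs e2 ae2 ->
  (so_sat M e1 e2 (tr bn bs phi) <-> asat ae1 ae2 phi).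
Proof.
  induction phi; intros bn bs e1 e2 ae1 ae2 HN HS; simpl tr; simpl asat.
  - rewrite sat_Ex. setoid_rewrite sat_Ex. split.
    + intros [a [b [H1 [H2 H3]]]]. trtrw H1 t. trtrw H2 u.
      rewrite (sat_Eq M h hinj) in H3. updsimp0. congruence.
    + intro E. exists (hinv (aeval ae1 t)), (hinv (aeval ae1 u)). split; [|split].
      * trtrwg t. updsimp0. auto.
      * trtrwg u. updsimp0. auto.
      * rewrite (sat_Eq M h hinj). updsimp0. rewrite !hK. auto.
  - rewrite sat_Ex. setoid_rewrite sat_Ex. setoid_rewrite sat_Ex. setoid_rewrite sat_Ex. split.
    + intros [a0 [a1 [a2 [a3 [H1 [H2 [H3 H4]]]]]]]. trtrw H1 t. trtrw H2 u.
      rewrite (sat_SS M x h Hiso) in H3. rewrite (sat_SP M x h Hiso) in H4. updsimp0. lia.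
    + intro E. exists (hinv (aeval ae1 t)), (hinv (aeval ae1 u)),
        (hinv (aeval ae1 u - aeval ae1 t - 1)), (hinv (aeval ae1 u - aeval ae1 t)).
      split; [|split; [|split]].
      * trtrwg t. updsimp0. auto.
      * trtrwg u. updsimp0. auto.
      * rewrite (sat_SS M x h Hiso). updsimp0. rewrite !hK. lia.
      * rewrite (sat_SP M x h Hiso). updsimp0. rewrite !hK. lia.
  - rewrite sat_Ex. split.
    + intros [a [H1 H2]]. trtrw H1 t. rewrite (memf_ok _ _ _ _ _ ae2 HS) in H2. updsimp0.
      rewrite H1 in H2. auto.
    + intro E. exists (hinv (aeval ae1 t)). split.
      * trtrwg t. updsimp0. auto.
      * rewrite (memf_ok _ _ _ _ _ ae2 HS). updsimp0. rewrite hK. auto.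
  - cbn [so_sat]. rewrite (IHphi _ _ _ _ _ _ HN HS). tauto.
  - cbn [so_sat]. rewrite (IHphi1 _ _ _ _ _ _ HN HS), (IHphi2 _ _ _ _ _ _ HN HS). tauto.
  - split.
    + intros H a. specialize (H (hinv a)).
      rewrite (IHphi _ _ _ _ _ _ (RelN_cons _ _ _ n (hinv a) HN) HS) in H.
      rewrite hK in H. exact H.
    + intros H b. rewrite (IHphi _ _ _ _ _ _ (RelN_cons _ _ _ n b HN) HS). apply H.
  - split.
    + intros H Y. specialize (H (fun v => Y (h (Vector.hd v)))).
      rewrite (IHphi _ _ _ _ _ _ HN (RelS_cons _ _ _ X _ Y HS (fun b => iff_refl _))) in H.
      exact H.
    + intros H R.
      assert (HR : forall b, R (vc b vn) <-> (fun n => R (vc (hinv n) vn)) (h b)).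
      { intro b. simpl. rewrite (hinj (hinv (h b)) b); [tauto|]. rewrite hK; auto. }
      rewrite (IHphi _ _ _ _ _ _ HN (RelS_cons _ _ _ X R _ HS HR)).
      apply H.
Qed.

Lemma theta_ok phi : (forall e1 e2, so_sat M e1 e2 (theta phi)) <->
  asat (fun _ => 0) (fun X n => if Nat.eqb X 0 then x n = true else False) phi.
Proof.
  assert (HS : forall e2, RelS x h nil e2 (fun X n => if Nat.eqb X 0 then x n = true else False)).
  { intros e2 X. simpl. intro m. destruct (Nat.eqb_spec X 0); subst; simpl; intuition. }
  split.
  - intro H. specialize (H (fun _ => 0) (fun _ _ _ => False) (hinv 0)).
    rewrite sat_Imp in H. rewrite (sat_SZ M x h Hiso) in H.
    rewrite upd1_eq, hK in H. specialize (H eq_refl).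
    assert (HN : RelN h nil (upd1 (fun _ : nat => 0) 1 (hinv 0)) (fun _ : nat => 0)).
    { split. rewrite upd1_eq, hK; auto. intro n; simpl; auto. }
    rewrite (tr_ok _ _ _ _ _ (fun _ => 0) _ HN (HS _)) in H. exact H.
  - intros H e1 e2 a. rewrite sat_Imp. rewrite (sat_SZ M x h Hiso). rewrite upd1_eq. intro Ha.
    assert (HN : RelN h nil (upd1 e1 1 a) (fun _ : nat => 0)).
    { split. rewrite upd1_eq; auto. intro n; simpl; auto. }
    rewrite (tr_ok _ _ _ _ _ (fun _ => 0) _ HN (HS _)). exact H.
Qed.
End Transl2.

Definition fZ y : so_formula sg := @SRel sg SZ (vc y vn).
Definition fS a b : so_formula sg := @SRel sg SS (vc a (vc b vn)).
Definition fP a b c : so_formula sg := @SRel sg SP (vc a (vc b (vc c vn))).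
Definition fM a b c : so_formula sg := @SRel sg SM (vc a (vc b (vc c vn))).
Definition fU a : so_formula sg := @SRel sg SU (vc a vn).
Definition fX a : so_formula sg := SVar 1 0 (vc a vn).

Definition ax1 := FEx 0 (fZ 0).
Definition ax2 := SAll1 0 (SAll1 1 (FImp (SAnd (fZ 0) (fZ 1)) (SEq 0 1))).
Definition ax3 := SAll1 0 (FEx 1 (fS 0 1)).
Definition ax4 := SAll1 0 (SAll1 1 (SAll1 2 (FImp (SAnd (fS 0 1) (fS 0 2)) (SEq 1 2)))).
Definition ax5 := SAll1 0 (SAll1 1 (SAll1 2 (FImp (SAnd (fS 0 2) (fS 1 2)) (SEq 0 1)))).
Definition ax6 := SAll1 0 (SAll1 1 (FImp (fZ 1) (SNot (fS 0 1)))).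
Definition ax7 := SAll2 1 0 (FImp (SAnd (SAll1 0 (FImp (fZ 0) (fX 0)))
                    (SAll1 0 (SAll1 1 (FImp (SAnd (fX 0) (fS 0 1)) (fX 1))))) (SAll1 0 (fX 0))).
Definition ax8 := SAll1 0 (SAll1 1 (SAll1 2 (FImp (fZ 1) (FIff (fP 0 1 2) (SEq 0 2))))).
Definition ax9 := SAll1 0 (SAll1 1 (SAll1 2 (SAll1 3 (FImp (fS 1 2)
                    (FIff (fP 0 2 3) (FEx 4 (SAnd (fP 0 1 4) (fS 4 3)))))))).
Definition ax10 := SAll1 0 (SAll1 1 (SAll1 2 (FImp (fZ 1) (FIff (fM 0 1 2) (fZ 2))))).
Definition ax11 := SAll1 0 (SAll1 1 (SAll1 2 (SAll1 3 (FImp (fS 1 2)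
                    (FIff (fM 0 2 3) (FEx 4 (SAnd (fM 0 1 4) (fP 4 0 3)))))))).
Fixpoint chain (n y : nat) : so_formula sg :=
  match n with
  | 0 => fZ y
  | S n => FEx (temp n) (SAnd (chain n (temp n)) (fS (temp n) y))
  end.
Definition bitlink n := SAll1 1 (FImp (chain n 1) (FIff (fU 1) (@SRel sg (SBit n) vn))).

Definition Ax (psi : so_formula sg) : Prop :=
  psi = ax1 \/ psi = ax2 \/ psi = ax3 \/ psi = ax4 \/ psi = ax5 \/ psi = ax6 \/ psi = ax7 \/
  psi = ax8 \/ psi = ax9 \/ psi = ax10 \/ psi = ax11 \/ exists n, psi = bitlink n.

Lemma nfn_ex (P : nat -> Prop) : ~ (forall a, ~ P a) <-> exists a, P a.
Proof. split. intro H. apply NNPP; intro H'. apply H; intros a Ha; apply H'; eauto.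
  intros [a Ha] H. exact (H a Ha). Qed.

Section Categ.
Variable M : structure sg.
Hypothesis HM : forall psi, Ax psi -> forall e1 e2, so_sat M e1 e2 psi.

Definition e10 : env1 := fun _ => 0.
Definition e20 : env2 := fun _ _ _ => False.

Ltac getax H a := pose proof (HM a ltac:(unfold Ax; tauto) e10 e20) as H;
  unfold a, FEx, FImp, FIff, fZ, fS, fP, fM, fX in H; simpl in H; unfold upd1 in H; simpl in H.

Definition isZ a := M SZ (vc a vn) = true.
Definition isS a b := M SS (vc a (vc b vn)) = true.
Definition isP a b c := M SP (vc a (vc b (vc c vn))) = true.
Definition isM a b c := M SM (vc a (vc b (vc c vn))) = true.

Lemma Zex : exists a, isZ a.
Proof. getax H ax1. apply NNPP; intro H'. apply H; intros a Ha; apply H'; exists a; exact Ha. Qed.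
Lemma Zuniq a b : isZ a -> isZ b -> a = b.
Proof. getax H ax2. intros Ha Hb. specialize (H a b). apply NNPP; intro; apply H; auto. Qed.
Lemma Stot a : exists b, isS a b.
Proof. getax H ax3. specialize (H a). apply NNPP; intro H'. apply H; intros b Hb; apply H'; exists b; exact Hb. Qed.
Lemma Sfun a b c : isS a b -> isS a c -> b = c.
Proof. getax H ax4. intros Ha Hb. specialize (H a b c). apply NNPP; intro; apply H; auto. Qed.
Lemma Sinj a b c : isS a c -> isS b c -> a = b.
Proof. getax H ax5. intros Ha Hb. specialize (H a b c). apply NNPP; intro; apply H; auto. Qed.
Lemma Snz a b : isZ b -> ~ isS a b.
Proof. getax H ax6. intros Ha Hb. specialize (H a b). apply H; auto. Qed.
Lemma Ind (Xp : nat -> Prop) : (forall a, isZ a -> Xp a) -> (forall a b, Xp a -> isS a b -> Xp b) ->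
  forall a, Xp a.
Proof.
  getax H ax7. intros H0 HS. specialize (H (fun v => Xp (Vector.hd v))).
  rewrite !upd2_1 in H. simpl in H. apply NNPP; intro Hn. apply H. split; [split|].
  - intros a [Ha Hb]. apply Hb. auto.
  - intros a b [[Ha Hb] Hc]. apply Hc. eauto.
  - intro Hall. apply Hn. exact Hall.
Qed.
Lemma P1 a b c : isZ b -> (isP a b c <-> a = c).
Proof. getax H ax8. specialize (H a b c). intro Hb. unfold isP. split; intro; apply NNPP; intro; apply H; tauto. Qed.
Lemma P2 a b b' c' : isS b b' -> (isP a b' c' <-> exists c, isP a b c /\ isS c c').
Proof.
  getax H ax9. specialize (H a b b' c'). intro Hb. unfold isP, isS in *.
  rewrite nfn_ex in H. destruct (classic (exists w, M SP (vc a (vc b (vc w vn))) = true /\ M SS (vc w (vc c' vn)) = true));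
  destruct (classic (M SP (vc a (vc b' (vc c' vn))) = true)); tauto.
Qed.
Lemma M1 a b c : isZ b -> (isM a b c <-> isZ c).
Proof. getax H ax10. specialize (H a b c). intro Hb. unfold isM, isZ in *. split; intro; apply NNPP; intro; apply H; tauto. Qed.
Lemma M2 a b b' c' : isS b b' -> (isM a b' c' <-> exists c, isM a b c /\ isP c a c').
Proof.
  getax H ax11. specialize (H a b b' c'). intro Hb. unfold isM, isP, isS in *.
  rewrite nfn_ex in H. destruct (classic (exists w, M SM (vc a (vc b (vc w vn))) = true /\ M SP (vc w (vc a (vc c' vn))) = true));
  destruct (classic (M SM (vc a (vc b' (vc c' vn))) = true)); tauto.
Qed.

Definition z0 := proj1_sig (constructive_indefinite_description _ Zex).
Lemma z0Z : isZ z0.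
Proof. exact (proj2_sig (constructive_indefinite_description _ Zex)). Qed.
Definition succ a := proj1_sig (constructive_indefinite_description _ (Stot a)).
Lemma succS a : isS a (succ a).
Proof. exact (proj2_sig (constructive_indefinite_description _ (Stot a))). Qed.
Fixpoint g n := match n with 0 => z0 | S n => succ (g n) end.
Lemma isS_succ a b : isS a b -> b = succ a.
Proof. intro H. apply (Sfun a); auto. apply succS. Qed.
Lemma isZ_z a : isZ a -> a = z0.
Proof. intro H. apply Zuniq; auto. apply z0Z. Qed.

Lemma g_inj : forall n m, g n = g m -> n = m.
Proof.
  induction n; destruct m; simpl; intro E; auto.
  - exfalso. apply (Snz (g m) z0 z0Z). rewrite E. apply succS.
  - exfalso. apply (Snz (g n) z0 z0Z). rewrite <- E. apply succS.
  - f_equal. apply IHn. apply (Sinj _ _ (succ (g m))). rewrite <- E. apply succS. apply succS.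
Qed.
Lemma g_surj a : exists n, g n = a.
Proof.
  apply (Ind (fun a => exists n, g n = a)).
  - intros b Hb. exists 0. simpl. symmetry. apply isZ_z; auto.
  - intros b c [n Hn] Hbc. exists (S n). simpl. rewrite Hn. symmetry. apply isS_succ; auto.
Qed.
Definition hh a := proj1_sig (constructive_indefinite_description _ (g_surj a)).
Lemma ghh a : g (hh a) = a.
Proof. exact (proj2_sig (constructive_indefinite_description _ (g_surj a))). Qed.
Lemma hhg n : hh (g n) = n.
Proof. apply g_inj. apply ghh. Qed.

Lemma Z_g c : isZ (g c) <-> c = 0.
Proof. split. intro H. apply g_inj. apply isZ_z. auto. intros ->. apply z0Z. Qed.
Lemma S_g a b : isS (g a) (g b) <-> b = S a.
Proof. split. intro H. apply g_inj. simpl. apply isS_succ. auto. intros ->. apply succS. Qed.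

Lemma P_g a b : forall c, isP (g a) (g b) (g c) <-> c = a + b.
Proof.
  induction b; intro c.
  - rewrite (P1 _ _ _ z0Z). split. intro H. apply g_inj in H. lia. intros ->. f_equal. lia.
  - rewrite (P2 _ _ _ _ (succS (g b))). split.
    + intros [w [H1 H2]]. destruct (g_surj w) as [k <-]. rewrite IHb in H1. rewrite S_g in H2. lia.
    + intros ->. exists (g (a + b)). split. rewrite IHb; auto. rewrite S_g. lia.
Qed.
Lemma M_g a b : forall c, isM (g a) (g b) (g c) <-> c = a * b.
Proof.
  induction b; intro c.
  - rewrite (M1 _ _ _ z0Z). rewrite Z_g. lia.
  - rewrite (M2 _ _ _ _ (succS (g b))). split.
    + intros [w [H1 H2]]. destruct (g_surj w) as [k <-]. rewrite IHb in H1. rewrite P_g in H2.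
      rewrite Nat.mul_succ_r. lia.
    + intros ->. exists (g (a * b)). split. rewrite IHb; auto. rewrite P_g. rewrite Nat.mul_succ_r. lia.
Qed.

Lemma chain_ok n : forall y e1 e2, (forall j, j < n -> y <> temp j) ->
  (so_sat M e1 e2 (chain n y) <-> e1 y = g n).
Proof.
  induction n; intros y e1 e2 Hy.
  - simpl. change (isZ (e1 y) <-> e1 y = z0). split. apply isZ_z. intros ->; apply z0Z.
  - unfold chain; fold chain. rewrite sat_Ex. split.
    + intros [a [H1 H2]]. rewrite IHn in H1 by (intros j Hj E; apply temp_inj in E; lia).
      change (isS (upd1 e1 (temp n) a (temp n)) (upd1 e1 (temp n) a y)) in H2.
      rewrite upd1_eq in H1, H2. rewrite upd1_neq in H2 by (apply Hy; lia). subst a.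
      apply isS_succ in H2. simpl. auto.
    + intro E. exists (g n). split.
      * rewrite IHn by (intros j Hj E'; apply temp_inj in E'; lia). apply upd1_eq.
      * change (isS (upd1 e1 (temp n) (g n) (temp n)) (upd1 e1 (temp n) (g n) y)).
        rewrite upd1_eq. rewrite upd1_neq by (apply Hy; lia). rewrite E. apply succS.
Qed.

Lemma bitU n : M SU (vc (g n) vn) = M (SBit n) vn.
Proof.
  assert (Hax : Ax (bitlink n)) by (do 11 right; exists n; reflexivity).
  pose proof (HM _ Hax e10 e20 (g n)) as H.
  rewrite sat_Imp, sat_Iff in H. rewrite chain_ok in H by (intros j Hj E; unfold temp in E; lia).
  rewrite upd1_eq in H. specialize (H eq_refl). simpl in H. rewrite upd1_eq in H.
  apply Bool.eq_iff_eq_true. exact H.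
Qed.

Lemma categ : forall s v, M s v = Mx (bits M) s (Vector.map hh v).
Proof.
  intros s v. destruct s; cbn in v.
  - rewrite (vec0 v). reflexivity.
  - destruct (vecS _ v) as [a [w ->]]. rewrite (vec0 w).
    destruct (g_surj a) as [k <-]. simpl. unfold get; simpl. rewrite hhg.
    apply Bool.eq_iff_eq_true. rewrite Nat.eqb_eq. apply Z_g.
  - destruct (vecS _ v) as [a [w ->]]. destruct (vecS _ w) as [b [w' ->]]. rewrite (vec0 w').
    destruct (g_surj a) as [k <-]. destruct (g_surj b) as [l <-]. simpl. unfold get; simpl. rewrite !hhg.
    apply Bool.eq_iff_eq_true. rewrite Nat.eqb_eq. apply S_g.
  - destruct (vecS _ v) as [a [w ->]]. destruct (vecS _ w) as [b [w' ->]].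
    destruct (vecS _ w') as [c [w'' ->]]. rewrite (vec0 w'').
    destruct (g_surj a) as [k <-]. destruct (g_surj b) as [l <-]. destruct (g_surj c) as [m <-].
    simpl. unfold get; simpl. rewrite !hhg.
    apply Bool.eq_iff_eq_true. rewrite Nat.eqb_eq. apply P_g.
  - destruct (vecS _ v) as [a [w ->]]. destruct (vecS _ w) as [b [w' ->]].
    destruct (vecS _ w') as [c [w'' ->]]. rewrite (vec0 w'').
    destruct (g_surj a) as [k <-]. destruct (g_surj b) as [l <-]. destruct (g_surj c) as [m <-].
    simpl. unfold get; simpl. rewrite !hhg.
    apply Bool.eq_iff_eq_true. rewrite Nat.eqb_eq. apply M_g.
  - destruct (vecS _ v) as [a [w ->]]. rewrite (vec0 w).
    destruct (g_surj a) as [k <-]. simpl. unfold get; simpl. rewrite hhg.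
    apply bitU.
Qed.

Lemma hh_inj a b : hh a = hh b -> a = b.
Proof. intro E. rewrite <- (ghh a), <- (ghh b), E. auto. Qed.

End Categ.

Lemma chain_std x n : forall y e1 e2, (forall j, j < n -> y <> temp j) ->
  (so_sat (Mx x) e1 e2 (chain n y) <-> e1 y = n).
Proof.
  induction n; intros y e1 e2 Hy.
  - simpl. unfold get; simpl. apply Nat.eqb_eq.
  - unfold chain; fold chain. rewrite sat_Ex. split.
    + intros [a [H1 H2]]. rewrite IHn in H1 by (intros j Hj E; apply temp_inj in E; lia).
      simpl in H2. unfold get in H2; simpl in H2. apply Nat.eqb_eq in H2.
      rewrite upd1_eq in H1, H2. rewrite upd1_neq in H2 by (apply Hy; lia). lia.
    + intro E. exists n. split.
      * rewrite IHn by (intros j Hj E'; apply temp_inj in E'; lia). apply upd1_eq.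
      * simpl. unfold get; simpl. apply Nat.eqb_eq.
        rewrite upd1_eq. rewrite upd1_neq by (apply Hy; lia). lia.
Qed.

Lemma std_ax x : forall psi, Ax psi -> forall e1 e2, so_sat (Mx x) e1 e2 psi.
Proof.
  intros psi Hpsi e1 e2.
  unfold Ax in Hpsi; repeat match type of Hpsi with _ \/ _ => destruct Hpsi as [Hpsi|Hpsi] end;
  try match type of Hpsi with ex _ => destruct Hpsi as [n Hpsi] end; subst psi;
  unfold ax1, ax2, ax3, ax4, ax5, ax6, ax7, ax8, ax9, ax10, ax11, FEx, FImp, FIff, fZ, fS, fP, fM, fX;
  simpl; unfold upd1; simpl; unfold get; simpl.
  - intro H. apply (H 0). reflexivity.
  - intros a b [[H1 H2] H3]. apply Nat.eqb_eq in H1, H2. lia.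
  - intros a H. apply (H (S a)). apply Nat.eqb_refl.
  - intros a b c [[H1 H2] H3]. apply Nat.eqb_eq in H1, H2. lia.
  - intros a b c [[H1 H2] H3]. apply Nat.eqb_eq in H1, H2. lia.
  - intros a b [H1 H2]. apply H2. intro H3. apply Nat.eqb_eq in H1, H3. lia.
  - intros R. rewrite !upd2_1. simpl. intros [[H0 HS] Hn]. apply Hn. intro a.
    induction a; apply NNPP; intro Hc.
    + apply (H0 0). split; auto.
    + apply (HS a (S a)). split; [split|]; auto. apply Nat.eqb_refl.
  - intros a b c [H1 H2]. apply Nat.eqb_eq in H1; subst b. apply H2. split; intros [H3 H4].
    + apply Nat.eqb_eq in H3. lia.
    + apply H4. apply Nat.eqb_eq. lia.
  - intros a b c d [H1 H2]. apply Nat.eqb_eq in H1. apply H2. split.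
    + intros [H3 H4]. apply H4. intro H5. apply Nat.eqb_eq in H3. apply (H5 (a + b)).
      split; apply Nat.eqb_eq; lia.
    + intros [H3 H4]. apply H4. apply Nat.eqb_eq. apply NNPP; intro H6. apply H3.
      intros w [H7 H8]. apply Nat.eqb_eq in H7, H8. lia.
  - intros a b c [H1 H2]. apply Nat.eqb_eq in H1; subst b. rewrite Nat.mul_0_r in *.
    apply H2. split; intros [H3 H4]; apply H4; apply Nat.eqb_eq; apply Nat.eqb_eq in H3; lia.
  - intros a b c d [H1 H2]. apply Nat.eqb_eq in H1. subst c. rewrite Nat.mul_succ_r in *. apply H2. split.
    + intros [H3 H4]. apply H4. intro H5. apply Nat.eqb_eq in H3. apply (H5 (a * b)).
      split; apply Nat.eqb_eq; lia.
    + intros [H3 H4]. apply H4. apply Nat.eqb_eq. apply NNPP; intro H6. apply H3.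
      intros w [H7 H8]. apply Nat.eqb_eq in H7, H8. lia.
  - intros a [H1 H2]. rewrite chain_std in H1 by (intros j Hj E; unfold temp in E; lia).
    simpl in H1. subst a. apply H2. split; intros [H3 H4]; tauto.
Qed.

Fixpoint lcode (l : list nat) : nat :=
  match l with nil => 0 | a :: l => S (Cantor.to_nat (a, lcode l)) end.
Lemma to_nat_inj p q : Cantor.to_nat p = Cantor.to_nat q -> p = q.
Proof. intro E. rewrite <- (Cantor.cancel_of_to p), <- (Cantor.cancel_of_to q), E. auto. Qed.
Lemma lcode_inj : forall l l', lcode l = lcode l' -> l = l'.
Proof.
  induction l; destruct l'; cbn [lcode]; intro E; try congruence.
  apply eq_add_S in E. apply to_nat_inj in E. injection E as E1 E2. subst. f_equal. auto.
Qed.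
Definition acode (a : atom sg) : nat :=
  Cantor.to_nat (sycode (projT1 a), lcode (Vector.to_list (projT2 a))).
Lemma acode_inj a b : acode a = acode b -> a = b.
Proof.
  destruct a as [s v], b as [s' v']. unfold acode; cbn [projT1 projT2]. intro E.
  apply to_nat_inj in E. injection E as E1 E2. apply sycode_inj in E1. subst s'.
  apply lcode_inj in E2. apply VectorSpec.to_list_inj in E2. subst. reflexivity.
Qed.

Definition stru (g : atom sg -> bool) : structure sg := fun s v => g (existT _ s v).
Definition batom (i : nat) : atom sg := existT _ (SBit i : sym sg) vn.

Lemma iso_bits M N : iso M N -> bits M = bits N.
Proof. intros [h [_ Hh]]. apply functional_extensionality. intro n. unfold bits. rewrite Hh. reflexivity. Qed.

Lemma iso_comb M N x : iso M (Mx x) -> iso N (Mx x) -> iso M N.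
Proof.
  intros [h1 [[i1 s1] H1]] [h2 [[i2 s2] H2]].
  pose (h2i := fun b => proj1_sig (constructive_indefinite_description _ (s2 b))).
  assert (K : forall b, h2 (h2i b) = b) by (intro b; exact (proj2_sig (constructive_indefinite_description _ (s2 b)))).
  exists (fun a => h2i (h1 a)). split; [split|].
  - intros a b E. apply i1. rewrite <- (K (h1 a)), <- (K (h1 b)), E. auto.
  - intro c. destruct (s1 (h2 c)) as [a Ha]. exists a. apply i2. rewrite K. auto.
  - intros s v. rewrite H1, H2. rewrite VectorSpec.map_map. f_equal.
    apply VectorSpec.map_ext. intro a. rewrite K. auto.
Qed.

Section Main.
Variable phi : aform.
Variable A : cantor -> Prop.
Hypothesis Hphi : forall x : cantor,
    A x <-> asat (fun _ => 0) (fun X n => if Nat.eqb X 0 then x n = true else False) phi.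
Definition TT (psi : so_formula sg) : Prop := Ax psi \/ psi = theta phi.

Lemma model_A M : so_model TT M -> A (bits M) /\ iso M (Mx (bits M)).
Proof.
  intro HM. assert (HAx : forall psi, Ax psi -> forall e1 e2, so_sat M e1 e2 psi).
  { intros psi H. apply HM. left; auto. }
  pose proof (categ M HAx) as Hiso.
  split.
  - apply Hphi. apply (theta_ok M (bits M) (hh M HAx) (g M HAx) Hiso (hhg M HAx) (hh_inj M HAx)).
    apply HM. right; auto.
  - exists (hh M HAx). split; [split|]; auto.
    + apply hh_inj.
    + intro b. exists (g M HAx b). apply hhg.
Qed.

Lemma Mx_model x : A x -> so_model TT (Mx x).
Proof.
  intros Ax0 psi [H| ->].
  - apply std_ax; auto.
  - apply (theta_ok (Mx x) x (fun a => a) (fun a => a)); auto.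
    intros s v. rewrite VectorSpec.map_id. auto.
    apply Hphi; auto.
Qed.
End Main.

Theorem lemma1p12 :
  SecondOrderAbsoluteMorley ->
  forall A : cantor -> Prop, lightface_projective A ->
    card_le_aleph1 A \/ exists P : cantor -> Prop, perfect_cantor P /\ (forall x, P x -> A x).
Proof.
  intros SOAM A [phi Hphi].
  destruct (SOAM sg (TT phi)) as [[W [lt [Hlt [f Hf]]]] | [P [[[M0 HM0] [Pcl Pni]] [HP2 HP3]]]].
  - left. exists W, lt. split; auto. exists (fun x => f (Mx x)).
    intros a b Ha Hb E. apply (Mx_model phi A Hphi) in Ha, Hb.
    apply (iso_bits _ _ (Hf _ _ Ha Hb E)).
  - right. exists (fun x => exists M, P M /\ bits M = x). split.
    + split; [|split].
      * exists (bits M0). eauto.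
      * intros x Hx.
        destruct (compact (atom sg) acode acode_inj (fun g => P (stru g)))
          with (R := fun n g => forall i, i < n -> g (batom i) = x i)
               (D := fun n => map batom (seq 0 n)) as [g [Pg Rg]].
        -- intros g Hg. apply Pcl. intro L. destruct (Hg L) as [h [Ph Eh]].
           exists (stru h). split; auto. intros [s v] Ha. unfold stru; simpl. symmetry. apply (Eh _ Ha).
        -- intros n m g Hnm Hm i Hi. apply Hm. lia.
        -- intros n g g' Eg Hg i Hi. rewrite <- Eg. auto. apply in_map. apply in_seq. lia.
        -- intro n. destruct (Hx n) as [y [[M [PM <-]] Hy]].
           exists (fun a => M (projT1 a) (projT2 a)). split. exact PM.
           intros i Hi. rewrite (Hy i Hi). reflexivity.
        -- exists (stru g). split; auto. apply functional_extensionality. intro i.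
           apply (Rg (S i)). lia.
      * intros x [M [PM <-]] n.
        destruct (Pni M PM (map batom (seq 0 n))) as [N [PN [NM Hag]]].
        exists (bits N). split; [eauto|split].
        -- intro E. apply (HP3 M N PM PN (fun e => NM (eq_sym e))).
           destruct (model_A phi A Hphi M (HP2 M PM)) as [_ I1].
           destruct (model_A phi A Hphi N (HP2 N PN)) as [_ I2].
           rewrite E in I2. exact (iso_comb _ _ _ I1 I2).
        -- intros i Hi. apply (Hag (batom i)). apply in_map. apply in_seq. lia.
    + intros x [M [PM <-]]. apply (model_A phi A Hphi M (HP2 M PM)).
Qed.
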